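(* Let $T$ be a tree and $u\in V(T)$ a vertex with $d_T(u)\ge 3$ that is adjacent to a leaf $v$ of $T$. Let $T'$ be any tree obtained by smoothing $u$ in $T-v$. Then $b(T)\le b(T')+1$; more precisely, $T$ has a burning sequence of length at most $b(T')+1$ whose first term is $v$.
   Context: All graphs are finite and simple. $T-v$ is the tree obtained by deleting $v$ and its incident edge. Smoothing: let $S$ be a tree and $w\in V(S)$ with $N_S(w)=\{w_1,\dots,w_q\}$, $q\ge 2$, and suppose exactly $p$ of these neighbours are leaves of $S$, labelled $w_1,\dots,w_p$ (if $p>0$); the remaining neighbours are labelled arbitrarily. A tree obtained by smoothing $w$ in $S$ is formed from $S$ by deleting $w$ (and its incident edges) and then: if $p\le 2$, adding the edges of the path $w_1w_3w_4\cdots w_qw_2$; if $p\ge 3$, additionally deleting $w_3,\dots,w_p$ and adding the edges of the path $w_1w_{p+1}w_{p+2}\cdots w_qw_2$. Burning process of a connected graph $G$: initially all vertices are unburned. In each round $r\ge 1$, one vertex $x_r$ that is unburned at the end of round $r-1$ is chosen as the source of round $r$; in round $r$ the source $x_r$ becomes burned, and so does every vertex that was unburned at the end of round $r-1$ and is adjacent to a vertex burned at the end of round $r-1$. Burned vertices stay burned. If all vertices are burned at the end of round $k$ (and not earlier), $(x_1,\dots,x_k)$ is called a burning sequence for $G$ of length $k$. The burning number $b(G)$ is the minimum length of a burning sequence for $G$. *)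

(* Defs.v *)
From mathcomp Require Import all_boot.
Set Implicit Arguments. Unset Strict Implicit. Unset Printing Implicit Defensive.

(* A finite simple graph is a pair (S, e): vertex set S : {set V} inside an
   ambient finType V, and a symmetric irreflexive edge relation e : rel V
   whose edges lie inside S. *)
Section Graphs.
Variable V : finType.

Definition graph_on (S : {set V}) (e : rel V) : Prop :=
  [/\ symmetric e, irreflexive e & forall x y, e x y -> (x \in S) && (y \in S)].

Definition connected_on (S : {set V}) (e : rel V) : Prop :=
  forall x y, x \in S -> y \in S ->
    connect [rel a b | [&& a \in S, b \in S & e a b]] x y.

Definition acyclic_on (S : {set V}) (e : rel V) : Prop :=
  ~ exists c : seq V, [/\ uniq c, 3 <= size c, all (mem S) c & cycle e c].

Definition is_tree (S : {set V}) (e : rel V) : Prop :=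
  [/\ graph_on S e, S != set0, connected_on S e & acyclic_on S e].

Definition nbrs (S : {set V}) (e : rel V) (w : V) : {set V} :=
  [set y in S | e w y].
Definition deg (S : {set V}) (e : rel V) (w : V) : nat := #|nbrs S e w|.
Definition leaf (S : {set V}) (e : rel V) (x : V) : bool :=
  (x \in S) && (deg S e x == 1).

Definition del_rel (e : rel V) (v : V) : rel V :=
  [rel x y | [&& x != v, y != v & e x y]].

Definition path_edge (p : seq V) (x y : V) : bool :=
  ((x, y) \in zip p (behead p)) || ((y, x) \in zip p (behead p)).

(* (S', e') is a tree obtained by smoothing w in (S, e).
   s = [:: w_1; ...; w_q] lists N_S(w) without repetition, q >= 2, and its
   first p entries are exactly the neighbours that are leaves.
   If p <= 2 : delete w, add path w_1 w_3 ... w_q w_2.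
   If p >= 3 : also delete w_3..w_p, add path w_1 w_(p+1) ... w_q w_2.
   (Uniformly: delete w and drop 2 (take p s); path
    w_1 :: drop (max p 2) s ++ [:: w_2].) *)
Definition smoothing_of (S : {set V}) (e : rel V) (w : V)
    (S' : {set V}) (e' : rel V) : Prop :=
  w \in S /\
  exists (s : seq V) (p : nat),
    [/\ uniq s, [set x in s] = nbrs S e w, 2 <= size s & p <= size s] /\
    [/\ (forall i, i < size s -> leaf S e (nth w s i) = (i < p)),
        S' = (S :\ w) :\: [set x in drop 2 (take p s)] &
        forall x y, e' x y =
          [&& x \in S', y \in S' &
              e x y || path_edge (nth w s 0 :: drop (maxn p 2) s ++ [:: nth w s 1]) x y]].

Definition burn_step (S : {set V}) (e : rel V) (B : {set V}) (x : V) : {set V} :=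
  x |: (B :|: [set y in S | [exists z in B, e z y]]).

Definition burned (S : {set V}) (e : rel V) (xs : seq V) : {set V} :=
  foldl (burn_step S e) set0 xs.

Definition burning_seq (S : {set V}) (e : rel V) (xs : seq V) : Prop :=
  [/\ forall (i : nat) (d : V), i < size xs ->
        (nth d xs i \in S) /\ (nth d xs i \notin burned S e (take i xs)),
      burned S e xs = S &
      forall i, i < size xs -> burned S e (take i xs) != S].

Definition is_burning_number (S : {set V}) (e : rel V) (k : nat) : Prop :=
  (exists xs, burning_seq S e xs /\ size xs = k) /\
  (forall xs, burning_seq S e xs -> k <= size xs).

End Graphs.

(* Main.v *)
Require Import Defs.
From mathcomp Require Import all_boot.
From Stdlib Require Import Classical.
Set Implicit Arguments. Unset Strict Implicit. Unset Printing Implicit Defensive.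

Lemma step_sub (V : finType) (S : {set V}) e (B : {set V}) (x : V) : B \subset burn_step S e B x.
Proof. by apply/subsetP=> y yB; rewrite /burn_step !inE yB orbT. Qed.

Lemma step_mono (V : finType) (S : {set V}) e (B B' : {set V}) (x x' : V) :
  B \subset B' -> (x \in B') || (x == x') -> burn_step S e B x \subset burn_step S e B' x'.
Proof.
move=> sB hx; apply/subsetP=> y; rewrite /burn_step !inE.
case/orP=> [/eqP->|/orP[yB|]].
- case/orP: hx=> [->|/eqP->]; first by rewrite orbT.
  by rewrite eqxx.
- by rewrite (subsetP sB _ yB) orbT.
case/andP=> yS /existsP[z /andP[zB ezy]].
rewrite yS /=; apply/orP; right; apply/orP; right.
by apply/existsP; exists z; rewrite (subsetP sB _ zB).
Qed.

Lemma fold_ext (V : finType) (S : {set V}) e (B : {set V}) (ys : seq V) : B \subset foldl (burn_step S e) B ys.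
Proof.
elim: ys B => [|y ys IH] B /=; first exact: subxx.
exact: subset_trans (step_sub S e B y) (IH _).
Qed.

Lemma fold_mono (V : finType) (S : {set V}) e (B B' : {set V}) (ys : seq V) :
  B \subset B' -> foldl (burn_step S e) B ys \subset foldl (burn_step S e) B' ys.
Proof.
elim: ys B B' => [|y ys IH] B B' //= sB.
by apply: IH; apply: step_mono; rewrite // eqxx orbT.
Qed.

Lemma fold_in (V : finType) (S : {set V}) e (B : {set V}) (ys : seq V) :
  B \subset S -> (forall y, y \in ys -> y \in S) -> foldl (burn_step S e) B ys \subset S.
Proof.
elim: ys B => [|y ys IH] B //= sB hy.
apply: IH => [|z zin]; last by apply: hy; rewrite inE zin orbT.
apply/subsetP=> z; rewrite /burn_step !inE; case/orP=> [/eqP->|/orP[/(subsetP sB)//|/andP[]//]].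
by apply: hy; rewrite inE eqxx.
Qed.

Lemma normalize (V : finType) (S : {set V}) e (ys : seq V) (B : {set V}) :
  B \subset S -> (forall y, y \in ys -> y \in S) ->
  S \subset foldl (burn_step S e) B ys ->
  exists zs, [/\ size zs <= size ys, foldl (burn_step S e) B zs = S,
    (forall i d, i < size zs -> nth d zs i \in S /\ nth d zs i \notin foldl (burn_step S e) B (take i zs)),
    (forall i, i < size zs -> foldl (burn_step S e) B (take i zs) != S) &
    (forall y ys', ys = y :: ys' -> B != S -> y \notin B -> exists zs', zs = y :: zs')].
Proof.
elim: ys B => [|y ys IH] B sBS hys /= sS.
  exists [::]; split => //=; first by apply/eqP; rewrite eqEsubset sBS.
have [BS|BnS] := eqVneq B S.
  by exists [::]; split => //= y' ys' _; rewrite BS eqxx.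
have [z [zS zB zdef]] : exists z, [/\ z \in S, z \notin B & (y \notin B -> z = y)].
  case: (boolP (y \in B)) => yB.
    have : S :\: B != set0.
      apply: contra BnS; rewrite setD_eq0 => sSB; rewrite eqEsubset sBS sSB //.
    by case/set0Pn=> z /setDP[zS zB]; exists z.
  by exists y; split => //; apply: hys; rewrite inE eqxx.
have hys' : forall y', y' \in ys -> y' \in S by move=> y' h; apply: hys; rewrite inE h orbT.
have sB1 : burn_step S e B z \subset S.
  apply/subsetP=> w; rewrite /burn_step !inE; case/orP=> [/eqP->//|/orP[/(subsetP sBS)//|/andP[]//]].
have sS1 : S \subset foldl (burn_step S e) (burn_step S e B z) ys.
  apply: subset_trans sS _; apply: fold_mono; apply: step_mono => //.
  case: (boolP (y \in B)) => yB; last by rewrite (zdef yB) eqxx orbT.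
  by [].
have [zs [Hsz Hf Hnth Hne _]] := IH _ sB1 hys' sS1.
exists (z :: zs); split => //=.
- case=> [|i] d /=; first by split.
  by move=> /Hnth.
- by case=> [|i] /=; [move=> _; exact: BnS | move/Hne].
- by move=> y' ys' [<- _] _ yB; exists zs; rewrite (zdef yB).
Qed.

Lemma fold_take_mono (V : finType) (S : {set V}) e (B : {set V}) (ys : seq V) r r' :
  r <= r' -> foldl (burn_step S e) B (take r ys) \subset foldl (burn_step S e) B (take r' ys).
Proof.
move=> le; rewrite -[take r' ys](cat_take_drop r) take_takel // foldl_cat.
exact: fold_ext.
Qed.

Lemma fold_take_S (V : finType) (S : {set V}) e (B : {set V}) (ys : seq V) r d :
  r < size ys -> foldl (burn_step S e) B (take r.+1 ys) =
     burn_step S e (foldl (burn_step S e) B (take r ys)) (nth d ys r).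
Proof. by move=> lt; rewrite (take_nth d lt) -cats1 foldl_cat. Qed.

Lemma step_nb (V : finType) (S : {set V}) (e : rel V) (B : {set V}) (x z y : V) :
  z \in B -> e z y -> y \in S -> y \in burn_step S e B x.
Proof.
move=> zB ezy yS; rewrite /burn_step !inE yS /=; apply/orP; right; apply/orP; right.
by apply/existsP; exists z; rewrite zB.
Qed.

Lemma in_stepE (V : finType) (S : {set V}) (e : rel V) (B : {set V}) (x y : V) :
  y \in burn_step S e B x -> [\/ y = x, y \in B | y \in S /\ exists2 z, z \in B & e z y].
Proof.
rewrite /burn_step !inE; case/orP=> [/eqP->|/orP[yB|/andP[yS /existsP[z /andP[zB ezy]]]]].
- by constructor 1.
- by constructor 2.
- by constructor 3; split => //; exists z.
Qed.

Lemma u_in (V : finType) (S : {set V}) (e : rel V) (v u : V) (xs : seq V) r :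
  u \in S -> e v u -> 1 <= r <= size xs ->
  u \in foldl (burn_step S e) (burn_step S e set0 v) (take r xs).
Proof.
move=> uS evu /andP[r1 rs].
apply: (subsetP (fold_take_mono _ _ _ _ r1)).
rewrite (fold_take_S _ _ _ v); last exact: leq_trans r1 rs.
by rewrite take0 /=; apply: (step_nb _ _ evu uS); rewrite /burn_step !inE eqxx.
Qed.

Lemma simulate (V : finType) (S S' : {set V}) (e e' : rel V) (v u : V) (xs : seq V) :
  u \in S -> e v u -> S' \subset S ->
  (forall z y, e' z y -> y \in S /\ (e z y || e u y)) ->
  forall r, r <= size xs -> burned S' e' (take r xs) \subset
     foldl (burn_step S e) (burn_step S e set0 v) (take r xs).
Proof.
move=> uS evu sS' he'; elim=> [|r IH] rs.
  by rewrite take0 /burned /=; apply/subsetP=> y; rewrite inE.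
rewrite /burned !(fold_take_S _ _ _ v) //.
have IH' := IH (ltnW rs); rewrite /burned in IH'.
apply/subsetP=> y /in_stepE [->|/(subsetP IH') yX|].
- by rewrite /burn_step !inE eqxx.
- by apply: (subsetP (step_sub _ _ _ _)).
case=> yS' [z zF ez].
have [yS /orP[ezy|euy]] := he' _ _ ez.
  exact: (step_nb _ (subsetP IH' _ zF) ezy yS).
apply: (step_nb _ _ euy yS); apply: u_in => //.
rewrite (ltnW rs) andbT; case: r {IH IH' rs} zF => //.
by rewrite take0 /= inE.
Qed.

Lemma mem_zip2 (T : eqType) (s1 s2 : seq T) a b :
  (a, b) \in zip s1 s2 -> a \in s1 /\ b \in s2.
Proof.
elim: s1 s2 => [|x s1 IH] [|y s2] //=.
rewrite inE; case/orP=> [/eqP[-> ->]|/IH[h1 h2]]; first by rewrite !inE !eqxx.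
by rewrite !inE h1 h2 !orbT.
Qed.

Lemma min_bn (V : finType) (S : {set V}) (e : rel V) n :
  (exists xs, burning_seq S e xs /\ size xs = n) ->
  exists m, is_burning_number S e m /\ m <= n.
Proof.
elim: n {-2}n (leqnn n) => [|N IH] n le hn.
  exists n; split=> //; split=> // xs bs.
  by move: le; rewrite leqn0 => /eqP->.
case: (classic (exists k, k < n /\ exists xs, burning_seq S e xs /\ size xs = k)).
  case=> k [lt hk].
  have kN : k <= N by rewrite -ltnS; apply: leq_trans lt le.
  have [m [hm le']] := IH k kN hk.
  by exists m; split=> //; apply: leq_trans le' (ltnW lt).
move=> nex; exists n; split=> //; split=> // xs bs.
rewrite leqNgt; apply/negP=> lt; apply: nex; exists (size xs); split=> //.
by exists xs.
Qed.

Theorem mainTheorem8 (V : finType) (S : {set V}) (e : rel V) (u v : V)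
    (S' : {set V}) (e' : rel V) (k' : nat) :
  is_tree S e ->
  u \in S -> 3 <= deg S e u ->
  leaf S e v -> e u v ->
  smoothing_of (S :\ v) (del_rel e v) u S' e' ->
  is_burning_number S' e' k' ->
  (exists k, is_burning_number S e k /\ k <= k'.+1) /\
  (exists xs, burning_seq S e (v :: xs) /\ size (v :: xs) <= k'.+1).
Proof.
case=> [[esym eirr ein] _ _ _] uS _ /andP[vS _] euv.
case=> _ [s [p [[us sdef s2 ps] [_ S'def e'def]]]].
case=> [[xs [[Hnth Hb Hne] Hsz]] _].
have evu : e v u by rewrite esym.
have sS' : S' \subset S.
  by apply/subsetP=> x; rewrite S'def !inE => /and4P[_ _ _].
have hs : forall y, y \in s -> y \in S /\ e u y.
  move=> y ys; have : y \in nbrs (S :\ v) (del_rel e v) u by rewrite -sdef inE.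
  by rewrite inE /= !inE => /andP[/andP[_ ->] /and3P[_ _ ->]].
set P := nth u s 0 :: drop (maxn p 2) s ++ [:: nth u s 1].
have hP : forall y, y \in P -> y \in s.
  move=> y; rewrite inE mem_cat inE; case/or3P=> [/eqP->|/mem_drop//|/eqP->].
  - by apply: mem_nth; apply: leq_trans s2.
  - by apply: mem_nth.
have he' : forall z y, e' z y -> y \in S /\ (e z y || e u y).
  move=> z y; rewrite e'def => /and3P[_ yS' /orP[hd|hpe]].
    split; first exact: (subsetP sS').
    by move: hd; rewrite /= => /and3P[_ _ ->].
  split; first exact: (subsetP sS').
  have : y \in P.
    case/orP: hpe => /mem_zip2 [h1 h2] //.
    exact: mem_behead.
  by move/hP/hs=> [_ ->]; rewrite orbT.
have [a [b [t sE]]] : exists a b t, s = a :: b :: t.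
  by case: s s2 {sdef us hs hP P he' e'def S'def ps} => [|a [|b t]] // _; exists a, b, t.
have hD : forall x, x \in drop 2 (take p s) -> x \in t.
  by rewrite sE => x; case: p {ps e'def S'def P hP he'} => [|[|q]] //=; rewrite drop0 => /mem_take.
have [ab a_t b_t] : [/\ a != b, a \notin t & b \notin t].
  by move: us; rewrite sE /= inE negb_or => /andP[/andP[-> ->] /andP[-> _]].
have inS'2 : forall x, x \in s -> x \notin t -> x \in S'.
  move=> x xin xt; have [xS eux] := hs x xin.
  rewrite S'def !inE xS andbT.
  have -> : x \notin drop 2 (take p s) by apply: contra xt; apply: hD.
  have -> /= : x != u by apply: contraTneq eux => ->; rewrite eirr.
  have : x \in nbrs (S :\ v) (del_rel e v) u by rewrite -sdef inE.
  by rewrite !inE => /andP[/andP[] ].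
have aS' : a \in S' by apply: inS'2 => //; rewrite sE inE eqxx.
have bS' : b \in S' by apply: inS'2 => //; rewrite sE !inE eqxx orbT.
have xs2 : 2 <= size xs.
  case: xs Hnth Hb Hne Hsz => [|x [|x' xs']] // _ Hb _ _.
    by move: aS'; rewrite -Hb inE.
  move: aS' bS'; rewrite -Hb /burned /= => ha hb.
  case/in_stepE: ha=> [ax|| [_ [z]]]; rewrite ?inE //.
  case/in_stepE: hb=> [bx|| [_ [z]]]; rewrite ?inE //.
  by move: ab; rewrite ax bx eqxx.
have hxsS : forall y, y \in xs -> y \in S.
  by move=> y /(nthP u) [i lt <-]; apply: (subsetP sS'); exact: (Hnth i u lt).1.
pose X r := foldl (burn_step S e) (burn_step S e set0 v) (take r xs).
have cov : S \subset X (size xs).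
  apply/subsetP=> x xS; rewrite /X.
  have [->|xv] := eqVneq x v.
    by apply: (subsetP (fold_ext _ _ _ _)); rewrite /burn_step !inE eqxx.
  have [->|xu] := eqVneq x u.
    by apply: (u_in uS evu); rewrite leqnn andbT (leq_trans _ xs2).
  case: (boolP (x \in drop 2 (take p s))) => xD.
    have [_ eux] := hs x (mem_take (mem_drop xD)).
    apply: (subsetP (fold_take_mono _ _ _ _ xs2)).
    rewrite (fold_take_S _ _ _ u) //; apply: (@step_nb _ _ _ _ _ u _ _ eux xS).
    by apply: (u_in uS evu); rewrite /= (ltnW xs2).
  have xS' : x \in S' by rewrite S'def !inE xD xu xv xS.
  apply: (subsetP (simulate uS evu sS' he' (leqnn _))).
  by rewrite take_size Hb.
have cov' : S \subset foldl (burn_step S e) set0 (v :: xs).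
  by move: cov; rewrite /X take_size.
have hys : forall y, y \in v :: xs -> y \in S.
  by move=> y; rewrite inE => /orP[/eqP->//|/hxsS].
have [zs [Hsz' Hf Hn Hne' Hhead]] := normalize (sub0set S) hys cov'.
have S0 : set0 != S by apply/eqP=> h; move: vS; rewrite -h inE.
have [zs' zsE] := Hhead v xs erefl S0 (negbT (in_set0 v)).
have bs : burning_seq S e zs by split.
have szs : size zs <= k'.+1 by rewrite -Hsz.
split.
  have [m [hm lm]] := min_bn (ex_intro _ zs (conj bs erefl)).
  by exists m; split=> //; apply: leq_trans lm szs.
by exists zs'; rewrite -zsE.
Qed.
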